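(* Let $\mathcal M$ be a sufficiently saturated geometric structure with universe $M$. Let $\mathbf x=(x_1,\dots,x_n)$ and $y$ be variables, and let $\chi(\mathbf x,y)$ be a formula of the form $\bigwedge_{i=1}^r C_i(\mathbf x^i,y)$, where each $\mathbf x^i$ is a subtuple of $\mathbf x$ and each $C_i(\mathbf x^i,y)$ is a formula defining an $\mathrm{acl}(\emptyset)$-definable $(|\mathbf x^i|+1)$-curve. Let $\mathbf x'$ be the subtuple of $\mathbf x$ consisting of all variables occurring in some $\mathbf x^i$. Then $\chi(\mathbf x,y)$ is equivalent in $\mathcal M$ to a disjunction $$E(\mathbf x',y)\vee\bigvee_{l=1}^L\bigl(y=q_l\wedge\phi_l(\mathbf x')\bigr),$$ where $E(\mathbf x',y)$ is a formula defining an $\mathrm{acl}(\emptyset)$-definable $(|\mathbf x'|+1)$-curve, $q_1,\dots,q_L\in\mathrm{acl}(\emptyset)$, each $\phi_l(\mathbf x')$ defines a boolean combination of $\mathrm{acl}(\emptyset)$-definable curve-based cylinders, and $\mathcal M\models E(\mathbf x',y)\rightarrow\bigwedge_{l=1}^L y\neq q_l$.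
   Context: A structure $\mathcal M$ is a geometric structure if every model of its theory satisfies: (1) Exchange: $a\in\mathrm{acl}(bC)\setminus\mathrm{acl}(C)\Rightarrow b\in\mathrm{acl}(aC)$; (2) Uniform finiteness: for each formula $\psi(y,\mathbf w)$ there is $k$ such that for every tuple $\mathbf a$ the set $\{b:\psi(b,\mathbf a)\}$ is infinite or has size $\le k$. Dimension of a definable set $X\subseteq M^n$ (defined by $\Phi$ over parameters $B$): the largest $d$ such that in a saturated extension some tuple satisfying $\Phi$ has a subtuple $(a_{i_1},\dots,a_{i_d})$ with $a_{i_{j+1}}\notin\mathrm{acl}(\{a_{i_1},\dots,a_{i_j}\}\cup B)$. An $A$-definable $n$-curve is a subset of $M^n$ of dimension $\le 1$ definable with parameters from $A$. A set $\tilde C\subseteq M^m$ is an $A$-definable cylinder based on an $n$-curve if there are indices $1\le i_1<\dots<i_n\le m$ and an $A$-definable $n$-curve $C$ with $\tilde C=\{(x_1,\dots,x_m)\in M^m:(x_{i_1},\dots,x_{i_n})\in C\}$; an $A$-definable curve-based cylinder is such a cylinder for some $n$. ''$\mathrm{acl}(\emptyset)$-definable'' means definable with parameters from $\mathrm{acl}(\emptyset)$. *)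

(* Defs.v *)
From Stdlib Require Import List.
From mathcomp Require Import all_boot.



Set Implicit Arguments.
Unset Strict Implicit.
Unset Printing Implicit Defensive.

Record signature := Signature {
  fsym : Type; farity : fsym -> nat;
  rsym : Type; rarity : rsym -> nat }.

Section Syntax.
Variable L : signature.

Inductive term : Type :=
| Tvar : nat -> term
| Tfun : forall f : fsym L, ('I_(farity f) -> term) -> term.

Inductive formula : Type :=
| Ffalse : formula
| Feq : term -> term -> formula
| Frel : forall r : rsym L, ('I_(rarity r) -> term) -> formula
| Fnot : formula -> formula
| Fand : formula -> formula -> formula
| For : formula -> formula -> formula
| Fex : nat -> formula -> formula
| Fall : nat -> formula -> formula.

Fixpoint occurs_t (k : nat) (t : term) : Prop :=
  match t with
  | Tvar n => n = k
  | Tfun _ args => exists i, occurs_t k (args i)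
  end.

Fixpoint free (k : nat) (phi : formula) : Prop :=
  match phi with
  | Ffalse => False
  | Feq t1 t2 => occurs_t k t1 \/ occurs_t k t2
  | Frel _ args => exists i, occurs_t k (args i)
  | Fnot p => free k p
  | Fand p q => free k p \/ free k q
  | For p q => free k p \/ free k q
  | Fex n p => free k p /\ k <> n
  | Fall n p => free k p /\ k <> n
  end.
End Syntax.

Record structure (L : signature) := Structure {
  univ :> Type;
  univ_elt : univ;
  funs : forall f : fsym L, ('I_(farity f) -> univ) -> univ;
  rels : forall r : rsym L, ('I_(rarity r) -> univ) -> Prop }.

Definition upd (T : Type) (v : nat -> T) (n : nat) (a : T) : nat -> T :=
  fun k => if k == n then a else v k.

Section Semantics.
Variables (L : signature) (M : structure L).

Fixpoint teval (v : nat -> M) (t : term L) : M :=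
  match t with
  | Tvar k => v k
  | Tfun f args => @funs L M f (fun i => teval v (args i))
  end.

Fixpoint sat (v : nat -> M) (phi : formula L) : Prop :=
  match phi with
  | Ffalse => False
  | Feq t1 t2 => teval v t1 = teval v t2
  | Frel r args => @rels L M r (fun i => teval v (args i))
  | Fnot p => ~ sat v p
  | Fand p q => sat v p /\ sat v q
  | For p q => sat v p \/ sat v q
  | Fex n p => exists a, sat (upd v n a) p
  | Fall n p => forall a, sat (upd v n a) p
  end.

(* The environment where variables 0..n-1 are given by the tuple x and the
   remaining variables by v. *)
Definition ext (n : nat) (x : 'I_n -> M) (v : nat -> M) : nat -> M :=
  fun k => match (insub k : option 'I_n) with Some i => x i | None => v k end.

(* algebraic closure of C in M: a satisfies a formula phi(y, c) (y = variable 0,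
   parameters c from C) with finitely many solutions *)
Definition acl (C : M -> Prop) (a : M) : Prop :=
  exists (phi : formula L) (v : nat -> M),
    (forall k, free k phi -> k <> 0 -> C (v k)) /\
    sat (upd v 0 a) phi /\
    exists s : list M, forall b, sat (upd v 0 b) phi -> In b s.

Definition omega_saturated : Prop :=
  forall (F : list nat) (v : nat -> M) (Sigma : formula L -> Prop),
    (forall phi, Sigma phi -> forall k, free k phi -> k = 0 \/ In k F) ->
    (forall s : list (formula L), (forall phi, In phi s -> Sigma phi) ->
       exists a, forall phi, In phi s -> sat (upd v 0 a) phi) ->
    exists a, forall phi, Sigma phi -> sat (upd v 0 a) phi.

Definition exchange : Prop :=
  forall (C : M -> Prop) (a b : M),
    acl (fun c => c = b \/ C c) a -> ~ acl C a -> acl (fun c => c = a \/ C c) b.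

Definition uniform_finiteness : Prop :=
  forall psi : formula L, exists k : nat, forall v : nat -> M,
    (~ exists s : list M, forall b, sat (upd v 0 b) psi -> In b s) \/
    (exists s : list M, (length s <= k)%coq_nat /\
        forall b, sat (upd v 0 b) psi -> In b s).
End Semantics.

Definition models_theory_of (L : signature) (M N : structure L) : Prop :=
  forall phi : formula L, (forall v : nat -> M, sat v phi) ->
                          forall w : nat -> N, sat w phi.

Definition geometric (L : signature) (M : structure L) : Prop :=
  forall N : structure L, models_theory_of M N ->
    exchange N /\ uniform_finiteness N.

Definition elementary_embedding (L : signature) (M N : structure L)
  (e : M -> N) : Prop :=
  forall (phi : formula L) (v : nat -> M), sat v phi <-> sat (fun k => e (v k)) phi.

Definition strictly_increasing (m n : nat) (f : 'I_m -> 'I_n) : Prop :=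
  forall i j : 'I_m, i < j -> f i < f j.

Section Definable.
Variables (L : signature) (M : structure L).

Definition params_in (A : M -> Prop) (n : nat) (phi : formula L) (v : nat -> M) :=
  forall k, free k phi -> n <= k -> A (v k).

(* dimension of the set defined by phi (tuple variables 0..n-1, parameters
   v k for the other free variables, forming the set B) is >= d: in some
   elementary extension N (equivalently in a saturated one), some tuple a
   satisfying phi has a subtuple a_{i_1},...,a_{i_d} with
   a_{i_{j+1}} not in acl(a_{i_1},...,a_{i_j}, B). *)
Definition dim_ge (n : nat) (phi : formula L) (v : nat -> M) (d : nat) : Prop :=
  exists (N : structure L) (e : M -> N), elementary_embedding e /\
  exists a : 'I_n -> N, sat (ext a (fun k => e (v k))) phi /\
  exists idx : 'I_d -> 'I_n, strictly_increasing idx /\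
    forall j : 'I_d,
      ~ acl (fun b => (exists j' : 'I_d, j' < j /\ b = a (idx j')) \/
                      (exists k, free k phi /\ n <= k /\ b = e (v k)))
            (a (idx j)).

Definition curve (A : M -> Prop) (n : nat) (X : ('I_n -> M) -> Prop) : Prop :=
  exists (phi : formula L) (v : nat -> M),
    params_in A n phi v /\
    (forall x, X x <-> sat (ext x v) phi) /\
    (forall d, dim_ge n phi v d -> d <= 1).

Definition curve_cylinder (A : M -> Prop) (m : nat) (X : ('I_m -> M) -> Prop) : Prop :=
  exists (k : nat) (tau : 'I_k -> 'I_m) (Cc : ('I_k -> M) -> Prop),
    strictly_increasing tau /\ curve A Cc /\
    forall x, X x <-> Cc (fun i => x (tau i)).
End Definable.

Inductive bool_comb (T : Type) (P : (T -> Prop) -> Prop) : (T -> Prop) -> Prop :=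
| bc_base X : P X -> bool_comb P X
| bc_not X : bool_comb P X -> bool_comb P (fun x => ~ X x)
| bc_and X Y : bool_comb P X -> bool_comb P Y -> bool_comb P (fun x => X x /\ Y x)
| bc_or X Y : bool_comb P X -> bool_comb P Y -> bool_comb P (fun x => X x \/ Y x).

Definition snoc (T : Type) (m : nat) (x : 'I_m -> T) (y : T) : 'I_m.+1 -> T :=
  fun k => match unlift ord_max k with Some k' => x k' | None => y end.

(* Main.v *)
From Stdlib Require Import List Classical ClassicalEpsilon FunctionalExtensionality PropExtensionality.
Require Import Defs.
From mathcomp Require Import all_boot.
Set Implicit Arguments.
Unset Strict Implicit.
Unset Printing Implicit Defensive.

Section Syn.
Variable L : signature.
Implicit Types (phi : formula L) (t : term L).

Fixpoint tbnd t : nat := match t with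
  | Tvar k => k.+1
  | Tfun f args => \max_(i < farity f) tbnd (args i) end.

Fixpoint fbnd phi : nat := match phi with
  | Ffalse => 0
  | Feq t1 t2 => maxn (tbnd t1) (tbnd t2)
  | Frel r args => \max_(i < rarity r) tbnd (args i)
  | Fnot p => fbnd p
  | Fand p q => maxn (fbnd p) (fbnd q)
  | For p q => maxn (fbnd p) (fbnd q)
  | Fex _ p => fbnd p
  | Fall _ p => fbnd p end.

Lemma occurs_bnd k t : occurs_t k t -> k < tbnd t.
Proof.
elim: t => [n /= -> //| f args IH /= [i Hi]].
apply: (leq_trans (IH i Hi)). exact: (leq_bigmax_cond (F := fun i => tbnd (args i)) i).
Qed.

Lemma free_bnd k phi : free k phi -> k < fbnd phi.
Proof.
elim: phi => /= [//|t1 t2 [H|H]|r args [i Hi]|p IH H|p IHp q IHq [H|H]|p IHp q IHq [H|H]|n p IH [H _]|n p IH [H _]].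
- by rewrite leq_max (occurs_bnd H).
- by rewrite leq_max (occurs_bnd H) orbT.
- apply: (leq_trans (occurs_bnd Hi)). exact: (leq_bigmax_cond (F := fun i => tbnd (args i)) i).
- exact: IH.
- by rewrite leq_max (IHp H).
- by rewrite leq_max (IHq H) orbT.
- by rewrite leq_max (IHp H).
- by rewrite leq_max (IHq H) orbT.
- exact: IH.
- exact: IH.
Qed.

Fixpoint tsub (g : nat -> nat) t := match t with
  | Tvar k => Tvar L (g k)
  | Tfun f args => Tfun (fun i => tsub g (args i)) end.

Fixpoint fsub (g : nat -> nat) phi : formula L := match phi with
  | Ffalse => Ffalse L
  | Feq t1 t2 => Feq (tsub g t1) (tsub g t2)
  | Frel r args => Frel (fun i => tsub g (args i))
  | Fnot p => Fnot (fsub g p)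
  | Fand p q => Fand (fsub g p) (fsub g q)
  | For p q => For (fsub g p) (fsub g q)
  | Fex n p => let n' := (\max_(k < fbnd p) g k).+1 in
       Fex n' (fsub (fun k => if k == n then n' else g k) p)
  | Fall n p => let n' := (\max_(k < fbnd p) g k).+1 in
       Fall n' (fsub (fun k => if k == n then n' else g k) p) end.

Lemma occurs_tsub k g t : occurs_t k (tsub g t) -> exists k', occurs_t k' t /\ k = g k'.
Proof.
elim: t => [n /= <-|f args IH /= [i Hi]]; first by exists n.
have [k' [H1 H2]] := IH i Hi. by exists k'; split => //; exists i.
Qed.

Lemma free_fsub k g phi : free k (fsub g phi) -> exists k', free k' phi /\ k = g k'.
Proof.
elim: phi k g => [|t1 t2|r args|p IH|p IHp q IHq|p IHp q IHq|n p IH|n p IH] k g /=.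
- by [].
- by case=> /occurs_tsub [k' [H ->]]; exists k'; split => //; [left|right].
- case=> i /occurs_tsub [k' [H ->]]; exists k'; split => //; by exists i.
- exact: IH.
- by case=> [/IHp|/IHq] [k' [H ->]]; exists k'; split => //; [left|right].
- by case=> [/IHp|/IHq] [k' [H ->]]; exists k'; split => //; [left|right].
- case=> /IH [k' [H ->]] Hn. exists k'. case: eqP Hn => [//|Hk _]; by split.
- case=> /IH [k' [H ->]] Hn. exists k'. case: eqP Hn => [//|Hk _]; by split.
Qed.

Section Sem.
Variable K : structure L.

Lemma upd_eq (v : nat -> K) n a : upd v n a n = a.
Proof. by rewrite /upd eqxx. Qed.
Lemma upd_neq (v : nat -> K) n a k : k <> n -> upd v n a k = v k.
Proof. by rewrite /upd; case: eqP. Qed.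

Lemma teval_coinc (w w' : nat -> K) t :
  (forall k, occurs_t k t -> w k = w' k) -> teval w t = teval w' t.
Proof.
elim: t => [n /= H|f args IH /= H]; first exact: H.
congr funs; apply: functional_extensionality => i; apply: IH => k Hk; apply: H; by exists i.
Qed.

Lemma sat_coinc phi (w w' : nat -> K) :
  (forall k, free k phi -> w k = w' k) -> (sat w phi <-> sat w' phi).
Proof.
elim: phi w w' => //= [t1 t2|r args|p IH|p IHp q IHq|p IHp q IHq|n p IH|n p IH] w w' H.
- by rewrite (teval_coinc (w' := w') (t := t1)) ?(teval_coinc (w' := w') (t := t2)) // => k Hk; apply: H; [right|left].
- have -> // : (fun i => teval w (args i)) = (fun i => teval w' (args i)).
  apply: functional_extensionality => i; apply: teval_coinc => k Hk; apply: H; by exists i.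
- by rewrite (IH w w').
- by rewrite (IHp w w') ?(IHq w w') // => k Hk; apply: H; [right|left].
- by rewrite (IHp w w') ?(IHq w w') // => k Hk; apply: H; [right|left].
- split=> [[a Ha]|[a Ha]]; exists a; [rewrite -(IH (upd w n a))|rewrite (IH _ (upd w' n a))] => // k Hk;
  rewrite /upd; case: eqP => // /eqP Hkn; apply: H; split => //; exact/eqP.
- split=> Ha a; [rewrite -(IH (upd w n a))|rewrite (IH _ (upd w' n a))] => // k Hk;
  rewrite /upd; case: eqP => // /eqP Hkn; apply: H; split => //; exact/eqP.
Qed.

Lemma sat_ext phi (w w' : nat -> K) : (forall k, w k = w' k) -> (sat w phi <-> sat w' phi).
Proof. by move=> H; apply: sat_coinc. Qed.

Lemma sat_ext_imp phi (w w' : nat -> K) : (forall k, w k = w' k) -> sat w phi -> sat w' phi.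
Proof. by move=> H; rewrite (sat_ext phi H). Qed.

Lemma sat_coinc_imp phi (w w' : nat -> K) :
  (forall k, free k phi -> w k = w' k) -> sat w phi -> sat w' phi.
Proof. by move=> H; rewrite (sat_coinc H). Qed.

Lemma teval_tsub (w : nat -> K) g t : teval w (tsub g t) = teval (fun k => w (g k)) t.
Proof.
elim: t => [n //|f args IH /=]. congr funs; apply: functional_extensionality => i; exact: IH.
Qed.

Lemma sat_fsub phi g (w : nat -> K) : sat w (fsub g phi) <-> sat (fun k => w (g k)) phi.
Proof.
elim: phi g w => //= [t1 t2|r args|p IH|p IHp q IHq|p IHp q IHq|n p IH|n p IH] g w.
- by rewrite !teval_tsub.
- have -> // : (fun i => teval w (tsub g (args i))) = (fun i => teval (fun k => w (g k)) (args i)).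
  apply: functional_extensionality => i; exact: teval_tsub.
- by rewrite IH.
- by rewrite IHp IHq.
- by rewrite IHp IHq.
- simpl; set n' := (\max_(k < fbnd p) g k).+1.
  have Hc : forall a k, free k p -> upd w n' a ((fun k => if k == n then n' else g k) k) = upd (fun k => w (g k)) n a k.
    move=> a k Hk; rewrite /upd; case: (k =P n) => [_|Hkn]; first by rewrite eqxx.
    have Hg : g k != n'.
      apply/eqP => He; have := leq_bigmax (F := fun k : 'I_(fbnd p) => g k) (Ordinal (free_bnd Hk)).
      by rewrite /= He /n' ltnn.
    by rewrite (negbTE Hg).
  split=> [[a Ha]|[a Ha]]; exists a; move: Ha; rewrite IH (sat_coinc (Hc a)) //.
- simpl; set n' := (\max_(k < fbnd p) g k).+1.
  have Hc : forall a k, free k p -> upd w n' a ((fun k => if k == n then n' else g k) k) = upd (fun k => w (g k)) n a k.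
    move=> a k Hk; rewrite /upd; case: (k =P n) => [_|Hkn]; first by rewrite eqxx.
    have Hg : g k != n'.
      apply/eqP => He; have := leq_bigmax (F := fun k : 'I_(fbnd p) => g k) (Ordinal (free_bnd Hk)).
      by rewrite /= He /n' ltnn.
    by rewrite (negbTE Hg).
  split=> Ha a; move: (Ha a); rewrite IH (sat_coinc (Hc a)) //.
Qed.

End Sem.

Definition Ftrue : formula L := Fnot (Ffalse L).
Definition Fimp p q : formula L := For (Fnot p) q.
Fixpoint Exs (l : seq nat) phi := if l is n :: l' then Fex n (Exs l' phi) else phi.
Fixpoint Falls (l : seq nat) phi := if l is n :: l' then Fall n (Falls l' phi) else phi.
Definition FAnds (s : seq (formula L)) := foldr (@Fand L) Ftrue s.

Fixpoint AtMost (n : nat) phi : formula L := match n with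
  | 0 => Fnot (Fex 0 phi)
  | n'.+1 => Fall (fbnd phi).+1
       (For (Fnot (fsub (fun k => if k == 0 then (fbnd phi).+1 else k) phi))
            (AtMost n' (Fand phi (Fnot (Feq (Tvar L 0) (Tvar L (fbnd phi).+1)))))) end.

Lemma free_Exs k l phi : free k (Exs l phi) -> free k phi /\ k \notin l.
Proof.
elim: l => [//|n l IH /= [/IH [H1 H2] H3]]; split => //.
by rewrite in_cons negb_or H2 andbT; apply/eqP.
Qed.

Lemma free_Falls k l phi : free k (Falls l phi) -> free k phi /\ k \notin l.
Proof.
elim: l => [//|n l IH /= [/IH [H1 H2] H3]]; split => //.
by rewrite in_cons negb_or H2 andbT; apply/eqP.
Qed.

Lemma free_FAnds k s : free k (FAnds s) -> exists p, List.In p s /\ free k p.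
Proof.
elim: s => [[]//|p s IH /= [H|/IH [q [H1 H2]]]]; first by exists p; split => //; left.
by exists q; split => //; right.
Qed.

Lemma free_AtMost n k phi : free k (AtMost n phi) -> free k phi /\ k <> 0.
Proof.
elim: n phi => [|n IH] phi /=; first by case.
case=> [[/free_fsub [k' [Hk' ->]]|/IH [H H0]] Hu].
- by case: eqP Hu => // Hk'0 _; split.
- case: H => [H|[E|E]]; [by split|by rewrite -E in H0|by rewrite /= -E in Hu].
Qed.

Lemma cat_app (T : Type) (s1 s2 : seq T) : s1 ++ s2 = app s1 s2.
Proof. by elim: s1 => //= x s1 ->. Qed.

Lemma In_cat (T : Type) (x : T) s1 s2 : List.In x (s1 ++ s2) <-> List.In x s1 \/ List.In x s2.
Proof. rewrite cat_app; split; [exact: in_app_or|exact: in_or_app]. Qed.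

Definition atmost (T : Type) (n : nat) (S : T -> Prop) :=
  exists l : seq T, size l <= n /\ forall b, S b -> List.In b l.

Lemma atmost0 (T : Type) (S : T -> Prop) : atmost 0 S <-> ~ exists a, S a.
Proof.
split=> [[l [Hl H]] [a Ha]|H].
- by case: l Hl H => // _ /(_ a Ha).
- exists [::]; split => // b Hb; case: H; by exists b.
Qed.

Lemma atmostS (T : Type) n (S : T -> Prop) :
  atmost n.+1 S <-> forall a, S a -> atmost n (fun b => S b /\ b <> a).
Proof.
split.
- move=> [l [Hl H]] a Ha. have [l1 [l2 E]] := in_split _ _ (H a Ha). rewrite -cat_app in E.
  exists (l1 ++ l2); split.
  + by move: Hl; rewrite E size_cat /= size_cat addnS.
  + move=> b [Hb Hba]; move: (H b Hb); rewrite E => /In_cat [H1|[H1|H1]]; apply/In_cat.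
    * by left.
    * by case: Hba.
    * by right.
- move=> H. case: (classic (exists a, S a)) => [[a Ha]|Hn].
  + have [l [Hl Hl']] := H a Ha. exists (a :: l); split => // b Hb.
    case: (classic (b = a)) => [->|Hba]; [by left|right; exact: Hl'].
  + exists [::]; split => // b Hb; case: Hn; by exists b.
Qed.

Lemma atmost_imp (T : Type) n (S1 S2 : T -> Prop) :
  (forall b, S2 b -> S1 b) -> atmost n S1 -> atmost n S2.
Proof. move=> H [l [Hl Hl']]; exists l; split => // b /H; exact: Hl'. Qed.

Section Sem2.
Variable K : structure L.

Lemma sat_Exs (w : nat -> K) l phi : sat w (Exs l phi) <->
  exists w', (forall k, k \notin l -> w' k = w k) /\ sat w' phi.
Proof.
elim: l w => [|n l IH] w /=; first by split=> [H|[w' [Hw H]]]; [exists w|move: H; apply: sat_ext_imp => k; exact: Hw].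
split=> [[a /IH [w' [Hw H]]]|[w' [Hw H]]].
- exists w'; split => // k; rewrite in_cons negb_or => /andP [/eqP Hkn Hkl].
  by rewrite Hw // upd_neq.
- exists (w' n); apply/IH; exists w'; split => // k Hk.
  case: (k =P n) => [->|Hkn]; first by rewrite upd_eq.
  by rewrite upd_neq // Hw // in_cons negb_or Hk andbT; apply/eqP.
Qed.

Lemma sat_Falls (w : nat -> K) l phi : sat w (Falls l phi) <->
  forall w', (forall k, k \notin l -> w' k = w k) -> sat w' phi.
Proof.
elim: l w => [|n l IH] w /=; first by split=> [H w' Hw|H]; [move: H; apply: sat_ext_imp => k; rewrite Hw|apply: H].
split=> [H w' Hw|H a].
- have /IH := H (w' n); apply => k Hk.
  case: (k =P n) => [->|Hkn]; first by rewrite upd_eq.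
  by rewrite upd_neq // Hw // in_cons negb_or Hk andbT; apply/eqP.
- apply/IH => w' Hw; apply: H => k; rewrite in_cons negb_or => /andP [/eqP Hkn Hkl].
  by rewrite Hw // upd_neq.
Qed.

Lemma sat_FAnds (w : nat -> K) s : sat w (FAnds s) <-> forall p, List.In p s -> sat w p.
Proof.
elim: s => [|p s IH] /=; first by split=> [_ p []|_ []].
rewrite IH; split=> [[H1 H2] q [<-|Hq]|H]; [by []|exact: H2|split].
- by apply: H; left.
- by move=> q Hq; apply: H; right.
Qed.

Lemma sat_AtMost n (w : nat -> K) phi :
  sat w (AtMost n phi) <-> atmost n (fun b => sat (upd w 0 b) phi).
Proof.
elim: n w phi => [|n IH] w phi /=; first by rewrite atmost0.
rewrite atmostS; set u := (fbnd phi).+1.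
have Hu0 : u != 0 by [].
have Hc : forall a b, sat (upd (upd w u a) 0 b) phi <-> sat (upd w 0 b) phi.
  move=> a b; apply: sat_coinc => k Hk; rewrite /upd.
  case: (k =P 0) => // _; case: (k =P u) => // Eku.
  by have := free_bnd Hk; rewrite Eku /u => /ltnW; rewrite ltnn.
have Hua : forall a b, upd (upd w u a) 0 b u = a by move=> a b; rewrite /upd (negbTE Hu0) eqxx.
split=> H a.
- move=> Ha; case: (H a) => [Hn|/IH].
  + exfalso; apply: Hn; rewrite sat_fsub; move: Ha; apply: sat_coinc_imp => k Hk; rewrite /upd.
    case: (k =P 0) => [E0|Hk0]; first by subst k; rewrite ?eqxx.
    case: (k =P u) => // Eku. by have := free_bnd Hk; rewrite Eku /u => /ltnW; rewrite ltnn.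
  + apply: atmost_imp => b; by rewrite /= Hc Hua.
- case: (classic (sat (upd w 0 a) phi)) => Ha; [right|left].
  + apply/IH; move: (H a Ha); apply: atmost_imp => b; by rewrite /= Hc Hua.
  + move=> Hs; apply: Ha; move: Hs; rewrite sat_fsub; apply: sat_coinc_imp => k Hk; rewrite /upd.
    case: (k =P 0) => [E0|Hk0]; first by subst k; rewrite ?eqxx.
    case: (k =P u) => // Eku. by have := free_bnd Hk; rewrite Eku /u => /ltnW; rewrite ltnn.
Qed.
End Sem2.
End Syn.


Lemma fin_union (J T : Type) (P : J -> T -> Prop) (s : list J) :
  (forall j, List.In j s -> exists l, forall y, P j y -> List.In y l) ->
  exists l, forall j y, List.In j s -> P j y -> List.In y l.
Proof.
elim: s => [|j s IH] H; first by exists [::] => ? ? [].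
have [l1 H1] := H j (or_introl erefl).
have [l2 H2] := IH (fun j' Hj' => H j' (or_intror Hj')).
exists (l1 ++ l2) => j' y [<-|Hj'] Hy; apply/In_cat; [left; exact: H1|right; exact: H2 Hj' Hy].
Qed.

Section Acl.
Variables (L : signature) (K : structure L).
Implicit Types (C S A : K -> Prop).

Lemma acl_mono C C' (a : K) : (forall c, C c -> C' c) -> acl C a -> acl C' a.
Proof.
move=> H [phi [v [Hp [Ha Hs]]]]; exists phi, v; split => // k Hk Hk0; apply: H; exact: Hp.
Qed.

Lemma acl_in C (a : K) : C a -> acl C a.
Proof.
move=> Ha; exists (Feq (Tvar L 0) (Tvar L 1)), (fun _ => a); split; last split.
- move=> k /= [<-|<-] //.
- by rewrite /= upd_eq upd_neq.
- exists [:: a] => b /=; rewrite upd_eq upd_neq // => ->; by left.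
Qed.

Lemma acl_trans1 C (a b : K) :
  acl (fun c => c = b \/ C c) a -> acl C b -> acl C a.
Proof.
move=> [psi [v [HP [Ha [s Hs]]]]] [th [u [HT [Hb [sb Hsb]]]]].
pose bad k := free k psi /\ ~ C (v k).
pose g k := if k == 0 then 0 else
   match excluded_middle_informative (bad k) with left _ => 1 | right _ => k.*2.+2 end.
pose g' k := if k == 0 then 1 else k.*2.+3.
pose U k := if odd k then u (k - 3)./2 else v (k - 2)./2.
have Ue k : U (k.*2.+2) = v k by rewrite /U /= odd_double /= !subSS subn0 doubleK.
have Uo k : U (k.*2.+3) = u k by rewrite /U /= odd_double /= !subSS subn0 doubleK.
pose rho := Fex 1 (Fand (fsub g' th) (Fand (fsub g psi) (AtMost (size s) (fsub g psi)))).
pose T Y z := sat (upd (upd U 1 Y) 0 z) (fsub g psi).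
have Hth : forall (W : nat -> K) Y, W 1 = Y -> (forall k, k != 0 -> W (k.*2.+3) = U (k.*2.+3)) ->
    (sat W (fsub g' th) <-> sat (upd u 0 Y) th).
  move=> W Y HW1 HW; rewrite sat_fsub; apply: sat_ext => k; rewrite /g' /upd.
  case: eqP => [_|/eqP Hk]; first by [].
  by rewrite HW // Uo.
have HTdef : forall x Y, sat (upd (upd (upd U 0 x) 1 Y) 0 x) (fsub g psi) <-> T Y x.
  move=> x Y; apply: sat_ext => k; rewrite /upd; by case: k => [|[|k]].
exists rho, U; split; last split.
- move=> k /= [Hk Hk1] Hk0.
  have Hfg : forall k, free k (fsub g psi) -> k <> 1 -> k <> 0 -> C (U k).
    move=> k0 /free_fsub [k' [Hk' ->]]; rewrite /g; case: eqP => // /eqP Hk'0.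
    case: excluded_middle_informative => // Hbad _ _.
    rewrite Ue; case: (classic (C (v k'))) => // HC; case: Hbad; by split.
  case: Hk => [/free_fsub [k' [Hk' E]]|[Hk|/free_AtMost [Hk _]]]; last first.
  + exact: Hfg.
  + exact: Hfg.
  + move: E Hk1 Hk0; rewrite /g'; case: eqP => [_ ->//|/eqP Hk'0 ->] _ _.
    rewrite Uo; apply: HT => //; exact/eqP.
- exists b; split.
  + by rewrite (Hth _ b) //; rewrite upd_eq.
  split.
  + rewrite sat_fsub; move: Ha; apply: sat_coinc_imp => k Hk; rewrite /upd /g.
    case: (k =P 0) => [E|Hk0]; first by subst k.
    case: excluded_middle_informative => [[_ Hbad]|Hnb] /=.
    * by case: (HP k Hk Hk0).
    * by rewrite Ue.
  + apply/sat_AtMost; exists s; split => // z; rewrite sat_fsub => Hz; apply: Hs; move: Hz.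
    apply: sat_coinc_imp => k Hk; rewrite /upd /g.
    case: (k =P 0) => [E|Hk0]; first by subst k.
    case: excluded_middle_informative => [[_ Hbad]|Hnb] /=.
    * by case: (HP k Hk Hk0) => // ->.
    * by rewrite Ue.
- have [l Hl] : exists l, forall Y z, List.In Y sb -> T Y z /\ atmost (size s) (T Y) -> List.In z l.
    apply: fin_union => Y _; case: (classic (atmost (size s) (T Y))) => [[l [_ Hl]]|Hn].
    * by exists l => z [Hz _]; exact: Hl.
    * by exists [::] => z [_ ?].
  exists l => x /= [Y [HthY [HpsY HA]]]; apply: (Hl Y).
  + apply: Hsb; move: HthY; rewrite (Hth _ Y) //; by rewrite upd_eq.
  + split; first by rewrite -HTdef; move: HpsY; apply: sat_ext_imp => k; rewrite /upd; by case: k => [|[|k]].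
    move: HA; rewrite sat_AtMost; apply: atmost_imp => z; rewrite /T; apply: sat_ext_imp => k; rewrite /upd.
    by case: k => [|[|k]].
Qed.

Lemma acl_trans_list S A (a : K) (l : list K) :
  (forall c, A c -> acl S c) ->
  acl (fun c => S c \/ (List.In c l /\ A c)) a -> acl S a.
Proof.
move=> HA; elim: l a => [|c0 l IH] a Ha.
- by apply: acl_mono Ha => c [//|[[]]].
- apply: IH; case: (classic (A c0)) => Hc0.
  + apply: (@acl_trans1 _ _ c0); last by apply: acl_mono (HA c0 Hc0) => c; left.
    apply: acl_mono Ha => c [Hc|[[<-|Hl] HAc]]; [right; left|left|right; right] => //.
  + apply: acl_mono Ha => c [Hc|[[<-|Hl] HAc]]; [left|by []|right] => //.
Qed.

Lemma acl_trans_set S A (a : K) :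
  acl (fun c => S c \/ A c) a -> (forall c, A c -> acl S c) -> acl S a.
Proof.
move=> [psi [v [HP [Ha Hs]]]] HA.
apply: (@acl_trans_list S A a (List.map v (List.seq 0 (fbnd psi)))) => //.
exists psi, v; split => // k Hk Hk0; case: (HP k Hk Hk0) => H; [by left|right; split => //].
apply: List.in_map; apply/List.in_seq; split; first exact/leP.
rewrite /=; apply/leP; exact: free_bnd Hk.
Qed.

Lemma acl_drop S A (a : K) :
  acl (fun c => S c \/ A c) a -> (forall c, A c -> acl (fun _ => False) c) -> acl S a.
Proof.
move=> H HA; apply: acl_trans_set H _ => c /HA; exact: acl_mono.
Qed.
End Acl.


Section Ext.
Variables (L : signature) (K : structure L).

Lemma ext_lt n (x : 'I_n -> K) v k (H : k < n) : ext x v k = x (Ordinal H).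
Proof. by rewrite /ext insubT. Qed.

Lemma ext_ord n (x : 'I_n -> K) v (i : 'I_n) : ext x v i = x i.
Proof. by rewrite (ext_lt x v (ltn_ord i)); congr x; apply: val_inj. Qed.

Lemma ext_ge n (x : 'I_n -> K) v k : n <= k -> ext x v k = v k.
Proof. by move=> H; rewrite /ext insubF // ltnNge H. Qed.
End Ext.

Section Transfer.
Variables (L : signature) (M N : structure L) (e : M -> N).
Hypothesis He : elementary_embedding e.

Lemma elem_models : models_theory_of M N.
Proof.
move=> phi Hall w.
set l := iota 0 (fbnd phi).
have H1 : sat (fun _ => univ_elt M) (Falls l phi) by apply/sat_Falls => w' _; exact: Hall.
have H2 := (proj1 (He _ _)) H1.
have H3 : sat w (Falls l phi).
  move: H2; apply: sat_coinc_imp => k /free_Falls [Hk]; rewrite mem_iota /= add0n (free_bnd Hk) //.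
by move/sat_Falls: H3; apply.
Qed.

Lemma elem_sat_upd (v : nat -> M) n a phi :
  sat (upd v n a) phi <-> sat (upd (fun k => e (v k)) n (e a)) phi.
Proof.
rewrite He; apply: sat_ext => k; rewrite /upd; by case: eqP.
Qed.

Lemma elem_acl0 (c : M) : acl (fun _ => False) c -> acl (fun _ : N => False) (e c).
Proof.
move=> [psi [v [HP [Hc [s Hs]]]]].
have H1 : sat v (AtMost (size s) psi) by apply/sat_AtMost; exists s; split.
move/He/sat_AtMost: H1 => [l [_ Hl]].
exists psi, (fun k => e (v k)); split; last split.
- move=> k Hk Hk0; exact: HP Hk Hk0.
- by rewrite -elem_sat_upd.
- by exists l.
Qed.
End Transfer.

Section Gen.
Variables (L : signature) (M : structure L).
Hypothesis Hsat : omega_saturated M.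

Lemma sat_gen (psi : formula L) (v : nat -> M) (F : list nat) :
  (forall k, free k psi -> k = 0 \/ List.In k F) -> ~ List.In 0 F ->
  (forall l, exists a, sat (upd v 0 a) psi /\ ~ List.In a l) ->
  exists a, sat (upd v 0 a) psi /\ ~ acl (fun c => exists k, List.In k F /\ c = v k) a.
Proof.
move=> HF HF0 Hinf.
pose Sigma (phi : formula L) := phi = psi \/ exists th, phi = Fnot th /\
   (forall k, free k th -> k = 0 \/ List.In k F) /\ exists l, forall b, sat (upd v 0 b) th -> List.In b l.
have [a Ha] : exists a, forall phi, Sigma phi -> sat (upd v 0 a) phi.
  have HS := @Hsat F v Sigma. apply: HS.
  - by move=> phi [->|[th [-> [Hth _]]]].
  - move=> s Hs.
    have [L0 HL0] : exists l, forall phi b, List.In phi s -> phi <> psi /\ ~ sat (upd v 0 b) phi -> List.In b l.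
      apply: fin_union => phi /Hs [->|[th [-> [_ [l Hl]]]]].
      + by exists [::] => b [].
      + exists l => b [_ Hb]; apply: Hl; exact: NNPP.
    have [a [Ha HaL]] := Hinf L0.
    exists a => phi Hphi; case: (classic (phi = psi)) => [->//|Hne].
    apply: NNPP => Hn; apply: HaL; exact: HL0 Hphi (conj Hne Hn).
exists a; split; first by apply: Ha; left.
move=> [th [v' [HT [Hth [l Hl]]]]].
pose g k := if k == 0 then 0 else epsilon (inhabits 0) (fun k'' => List.In k'' F /\ v' k = v k'').
have Hg : forall k, free k th -> k <> 0 -> List.In (g k) F /\ v' k = v (g k).
  move=> k Hk Hk0; rewrite /g; case: eqP => // _.
  apply: (epsilon_spec (inhabits 0) (fun k'' => List.In k'' F /\ v' k = v k'')).
  have [k'' [H1 H2]] := HT k Hk Hk0; by exists k''.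
have Heq : forall b, sat (upd v 0 b) (fsub g th) <-> sat (upd v' 0 b) th.
  move=> b; rewrite sat_fsub; apply: sat_coinc => k Hk; rewrite /upd.
  case: (k =P 0) => [E|Hk0]; first by rewrite E /g eqxx.
  have [H1 H2] := Hg k Hk Hk0.
  have Hg0 : g k != 0 by apply/eqP => E; rewrite E in H1.
  by rewrite (negbTE Hg0) H2.
have : sat (upd v 0 a) (Fnot (fsub g th)).
  apply: Ha; right; exists (fsub g th); split => //; split.
  - move=> k /free_fsub [k' [Hk' ->]]; case: (k' =P 0) => [E|Hk0]; first by left; rewrite E.
    right; exact: (proj1 (Hg k' Hk' Hk0)).
  - by exists l => b /Heq /Hl.
by rewrite /= Heq.
Qed.
End Gen.


Lemma half_odd k : (k.*2.+1)./2 = k.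
Proof. by rewrite /= uphalf_double. Qed.

Lemma In_mem (T : eqType) (x : T) (s : seq T) : List.In x s <-> x \in s.
Proof.
elim: s => [//|y s IH] /=; rewrite in_cons; split.
- by case=> [->|/IH H]; rewrite ?eqxx // H orbT.
- by case/orP => [/eqP ->|/IH H]; [left|right].
Qed.

Lemma In_map (T U : Type) (f : T -> U) (s : seq T) y :
  List.In y (map f s) <-> exists x, List.In x s /\ y = f x.
Proof.
elim: s => [|x s IH] /=; first by split=> [[]|[? [[]]]].
rewrite IH; split.
- by case=> [<-|[x' [H ->]]]; [exists x; split; [left|]|exists x'; split; [right|]].
- by case=> [x' [[<-|H] ->]]; [left|right; exists x'].
Qed.

Section Pres.
Variables (L : signature) (M : structure L).
Definition pres := (formula L * (nat -> M))%type.
Definition d0 := univ_elt M.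

Definition interp (K : structure L) (e : M -> K) n (P : pres) (x : 'I_n -> K) : Prop :=
  sat (ext x (fun k => e (P.2 k))) P.1.

Definition pok (A : M -> Prop) n (P : pres) := params_in A n P.1 P.2.

Definition pre_g n p (h : 'I_n -> 'I_p + M) k :=
  match insub k : option 'I_n with
  | Some j => match h j with inl i => val i | inr _ => p + k.*2.+1 end
  | None => p + k.*2 end.
Definition pre_v n p (h : 'I_n -> 'I_p + M) (v : nat -> M) k :=
  if k < p then d0 else
  if odd (k - p) then
     match insub (k - p)./2 : option 'I_n with
     | Some j => match h j with inr c => c | inl _ => d0 end
     | None => d0 end
  else v (k - p)./2.
Definition ppre n p (h : 'I_n -> 'I_p + M) (P : pres) : pres :=
  (fsub (pre_g h) P.1, pre_v h P.2).

Lemma pre_v_even n p h v k : @pre_v n p h v (p + k.*2) = v k.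
Proof. by rewrite /pre_v ltnNge leq_addr /= addKn odd_double doubleK. Qed.

Lemma pre_v_odd n p h v (j : 'I_n) : @pre_v n p h v (p + j.*2.+1) =
   match h j with inr c => c | inl _ => d0 end.
Proof.
rewrite /pre_v ltnNge leq_addr /= addKn /= odd_double /= uphalf_double.
by rewrite valK.
Qed.

Lemma interp_ppre (K : structure L) (e : M -> K) n p h P (x : 'I_p -> K) :
  interp e (@ppre n p h P) x <->
  interp e P (fun j => match h j with inl i => x i | inr c => e c end).
Proof.
rewrite /interp /= sat_fsub; apply: sat_ext => k; rewrite /pre_g.
case: insubP => [j _ <-|Hk].
- rewrite ext_ord; case E: (h j) => [i|c]; first by rewrite ext_ord.
  by rewrite ext_ge ?leq_addr // pre_v_odd E.
- by rewrite ext_ge ?leq_addr // pre_v_even ext_ge // leqNgt.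
Qed.

Lemma pok_ppre A n p h P : pok A n P -> (forall j c, h j = inr c -> A c) -> pok A p (@ppre n p h P).
Proof.
move=> HP Hh k /free_fsub [k' [Hk' ->]]; rewrite /pre_g.
case: insubP => [j _ Ej|Hk].
- case E: (h j) => [i|c] Hp; first by move: (ltn_ord i); rewrite ltnNge Hp.
  by rewrite /= -Ej pre_v_odd E; apply: Hh E.
- move=> _; rewrite /= pre_v_even; apply: HP => //; by rewrite leqNgt.
Qed.

Definition and_g1 n k := if k < n then k else n + (k - n).*2.
Definition and_g2 n k := if k < n then k else n + (k - n).*2.+1.
Definition and_v n (v1 v2 : nat -> M) k :=
  if k < n then d0 else if odd (k - n) then v2 (n + (k - n)./2) else v1 (n + (k - n)./2).
Definition pand n (P Q : pres) : pres :=
  (Fand (fsub (and_g1 n) P.1) (fsub (and_g2 n) Q.1), and_v n P.2 Q.2).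

Lemma and_v1 n v1 v2 k : n <= k -> and_v n v1 v2 (n + (k - n).*2) = v1 k.
Proof. by move=> H; rewrite /and_v ltnNge leq_addr /= addKn odd_double doubleK subnKC. Qed.
Lemma and_v2 n v1 v2 k : n <= k -> and_v n v1 v2 (n + (k - n).*2.+1) = v2 k.
Proof. by move=> H; rewrite /and_v ltnNge leq_addr /= addKn /= odd_double /= uphalf_double subnKC. Qed.

Lemma interp_pand (K : structure L) (e : M -> K) n P Q (x : 'I_n -> K) :
  interp e (pand n P Q) x <-> interp e P x /\ interp e Q x.
Proof.
rewrite /interp /= !sat_fsub.
have H1 : forall k, ext x (fun k => e (and_v n P.2 Q.2 k)) (and_g1 n k) = ext x (fun k => e (P.2 k)) k.
  move=> k; rewrite /and_g1; case: ltnP => Hk; first by rewrite !(ext_lt _ _ Hk).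
  by rewrite !ext_ge ?leq_addr ?and_v1.
have H2 : forall k, ext x (fun k => e (and_v n P.2 Q.2 k)) (and_g2 n k) = ext x (fun k => e (Q.2 k)) k.
  move=> k; rewrite /and_g2; case: ltnP => Hk; first by rewrite !(ext_lt _ _ Hk).
  by rewrite !ext_ge ?leq_addr ?and_v2.
by rewrite (sat_ext _ H1) (sat_ext _ H2).
Qed.

Lemma pok_pand A n P Q : pok A n P -> pok A n Q -> pok A n (pand n P Q).
Proof.
move=> HP HQ k [|] /free_fsub [k' [Hk' ->]]; rewrite /and_g1 /and_g2;
  (case: ltnP => Hk Hn; [by move: Hn; rewrite leqNgt Hk|]).
- rewrite /= and_v1 //; exact: HP.
- rewrite /= and_v2 //; exact: HQ.
Qed.

Definition ptrue : pres := (Ftrue L, fun _ => d0).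
Definition pands n (ps : seq pres) : pres := foldr (pand n) ptrue ps.

Lemma interp_pands (K : structure L) (e : M -> K) n ps (x : 'I_n -> K) :
  interp e (pands n ps) x <-> forall P, List.In P ps -> interp e P x.
Proof.
elim: ps => [|P ps IH] /=; first by split=> [_ P []|_ []].
rewrite interp_pand IH; split=> [[H1 H2] Q [<-|HQ]|H] //; first exact: H2.
split; [apply: H; left|move=> Q HQ; apply: H; right] => //.
Qed.

Lemma pok_pands A n ps : (forall P, List.In P ps -> pok A n P) -> pok A n (pands n ps).
Proof.
elim: ps => [|P ps IH] H /=; first by move=> k /= [].  
apply: pok_pand; [apply: H; left|apply: IH => Q HQ; apply: H; right] => //.
Qed.

Definition pnot (P : pres) : pres := (Fnot P.1, P.2).
Lemma interp_pnot (K : structure L) (e : M -> K) n P (x : 'I_n -> K) :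
  interp e (pnot P) x <-> ~ interp e P x.
Proof. by []. Qed.
Lemma pok_pnot A n P : pok A n P -> pok A n (pnot P).
Proof. by []. Qed.

Definition peqc n (j : 'I_n) (c : M) : pres := (Feq (Tvar L j) (Tvar L n), fun _ => c).
Lemma interp_peqc (K : structure L) (e : M -> K) n j c (x : 'I_n -> K) :
  interp e (@peqc n j c) x <-> x j = e c.
Proof. by rewrite /interp /= ext_ord ext_ge. Qed.
Lemma pok_peqc A n j c : A c -> pok A n (@peqc n j c).
Proof. by move=> Hc k /= [<-|<-] //; rewrite leqNgt ltn_ord. Qed.

Definition pproj n p (tau : 'I_p -> 'I_n) (P : pres) : pres :=
  (Exs (iota p n) (Fand (FAnds [seq Feq (Tvar L (p + tau j)) (Tvar L j) | j <- enum 'I_p])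
                        (fsub (addn p) P.1)),
   fun k => P.2 (k - p)).

Lemma interp_pproj (K : structure L) (e : M -> K) n p tau P (x : 'I_p -> K) :
  interp e (@pproj n p tau P) x <->
  exists t : 'I_n -> K, (forall j, t (tau j) = x j) /\ interp e P t.
Proof.
rewrite /interp /pproj sat_Exs; set W := ext x _.
have HW : forall k, p <= k -> W k = e (P.2 (k - p)) by move=> k Hk; rewrite /W ext_ge.
split.
- move=> [w' [Hw [HA HP]]].
  exists (fun j => w' (p + j)); split.
  + move=> j; move/sat_FAnds: HA => /(_ (Feq (Tvar L (p + tau j)) (Tvar L j))) /= ->.
    * rewrite Hw; first by rewrite /W ext_ord. by rewrite mem_iota negb_and -ltnNge ltn_ord.
    * apply/In_map; exists j; split => //; apply/In_mem; exact: mem_enum.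
  + change (sat w' (fsub (addn p) P.1)) in HP. move: HP; rewrite sat_fsub; apply: sat_ext_imp => k /=.
    case: (ltnP k n) => Hk; first by rewrite ext_lt.
    rewrite ext_ge // Hw ?HW ?leq_addr ?addKn //.
    by rewrite mem_iota negb_and ltnNge leq_add2l Hk orbT.
- move=> [t [Ht HP]].
  pose w' k := if k < p then W k else
      match insub (k - p) : option 'I_n with Some j => t j | None => W k end.
  exists w'; split; [|split].
  + move=> k; rewrite mem_iota negb_and -!ltnNge /w' => /orP [->//|Hk].
    case: ltnP => // Hpk; rewrite insubF //; by rewrite ltn_subLR // ltnNge -ltnS Hk.
  + apply/sat_FAnds => phi /In_map [j [_ ->]]; change (w' (p + tau j) = w' j).
    by rewrite {1}/w' ltnNge leq_addr [~~ true]/= addKn valK /w' ltn_ord Ht /W ext_ord.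
  + change (sat w' (fsub (addn p) P.1)).
    rewrite sat_fsub; move: HP; apply: sat_ext_imp => k.
    rewrite /w' ltnNge leq_addr [~~ true]/= addKn.
    case: insubP => [j _ <-|Hk]; first by rewrite ext_ord.
    rewrite ext_ge; last by rewrite leqNgt. by rewrite HW ?leq_addr // addKn.
Qed.

Lemma pok_pproj A n p tau P : pok A n P -> pok A p (@pproj n p tau P).
Proof.
move=> HP k /= /free_Exs [[/free_FAnds [phi [/In_map [j [_ ->]] /= [<-|<-]]]|/free_fsub [k' [Hk' ->]]] Hk].
- by rewrite mem_iota leq_addr ltn_add2l ltn_ord in Hk.
- by rewrite leqNgt ltn_ord.
- move=> _; rewrite addKn; apply: HP => //.
  by move: Hk; rewrite mem_iota leq_addr ltn_add2l /= -leqNgt.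
Qed.
End Pres.


Lemma snoc_lift (T : Type) n (x : 'I_n -> T) y (k : 'I_n) : snoc x y (lift ord_max k) = x k.
Proof. by rewrite /snoc liftK. Qed.
Lemma snoc_max (T : Type) n (x : 'I_n -> T) y : snoc x y ord_max = y.
Proof. by rewrite /snoc unlift_none. Qed.

Lemma si_lt m n (f : 'I_m -> 'I_n) : strictly_increasing f -> forall i j, (f i < f j) = (i < j).
Proof.
move=> Hf i j; case: (ltngtP i j) => [/Hf -> //|Hji|/val_inj ->]; last by rewrite ltnn.
by apply/negbTE; rewrite -leqNgt; apply: ltnW; apply: Hf.
Qed.

Lemma si_inj m n (f : 'I_m -> 'I_n) : strictly_increasing f -> injective f.
Proof.
move=> Hf i j E; apply: val_inj; case: (ltngtP i j) => // H.
- by have := Hf _ _ H; rewrite E ltnn.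
- by have := Hf _ _ H; rewrite E ltnn.
Qed.

Definition pair2 (T : Type) (z y : T) : 'I_2 -> T := fun j => if val j == 0 then z else y.

Lemma ext_pair2 (L : signature) (K : structure L) (z y : K) V k :
  ext (pair2 z y) V k = upd (upd V 1 y) 0 z k.
Proof.
case: k => [|[|k]]; rewrite ?(ext_lt _ _ (isT : 0 < 2)) ?(ext_lt _ _ (isT : 1 < 2)) //.
by rewrite ext_ge.
Qed.

Lemma In_nth_ord (T : Type) (d : T) (s : seq T) y :
  List.In y s <-> exists i : 'I_(size s), y = nth d s i.
Proof.
elim: s y => [|y0 s IH] y /=; first by split=> [[]|[[]]].
split.
- case=> [<-|/IH [i ->]]; first by exists ord0.
  by exists (lift ord0 i).
- case=> [[[|i] Hi]] /= ->; first by left.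
  right; apply/IH; by exists (Ordinal (Hi : i < size s)).
Qed.

Lemma list_filter_prop (T : Type) (P : T -> Prop) (l : seq T) :
  exists l', forall y, List.In y l' <-> List.In y l /\ P y.
Proof.
elim: l => [|a l [l' IH]]; first by exists [::] => y; split=> [[]|[[]]].
case: (classic (P a)) => Ha.
- exists (a :: l') => y /=; rewrite IH; split.
  + case=> [<-|[H1 H2]]; [split; [left|]|split; [right|]] => //.
  + case=> [[<-|H1] H2]; [left|right] => //.
- exists l' => y /=; rewrite IH; split.
  + by case=> H1 H2; split => //; right.
  + case=> [[E|H1] H2]; last by split.
    by rewrite E in Ha.
Qed.

Section Dim.
Variables (L : signature) (M : structure L).

Lemma dim_pair n phi (v : nat -> M) d : dim_ge n phi v d -> 1 < d ->
  exists (N : structure L) (e : M -> N), elementary_embedding e /\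
  exists a : 'I_n -> N, sat (ext a (fun k => e (v k))) phi /\
  exists j0 j1 : 'I_n, j0 < j1 /\ ~ acl (fun _ : N => False) (a j0) /\ ~ acl (fun c => c = a j0) (a j1).
Proof.
move=> [N [e [He [a [Ha [idx [Hinc Hind]]]]]]] Hd.
have H0 : 0 < d by exact: ltnW.
exists N, e; split => //; exists a; split => //.
exists (idx (Ordinal H0)), (idx (Ordinal Hd)); split; [by apply: Hinc|split].
- move=> Hac; apply: (Hind (Ordinal H0)); apply: acl_mono Hac => c [].
- move=> Hac; apply: (Hind (Ordinal Hd)); apply: acl_mono Hac => c ->; left.
  by exists (Ordinal H0).
Qed.

Lemma dim_build n phi (v : nat -> M) (N : structure L) (e : M -> N) :
  elementary_embedding e -> params_in (acl (fun _ : M => False)) n phi v ->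
  forall a : 'I_n -> N, sat (ext a (fun k => e (v k))) phi ->
  forall j0 j1 : 'I_n, j0 < j1 -> ~ acl (fun _ : N => False) (a j0) ->
  ~ acl (fun c => c = a j0) (a j1) -> dim_ge n phi v 2.
Proof.
move=> He HP a Ha j0 j1 H01 H0 H1.
exists N, e; split => //; exists a; split => //.
exists (fun j : 'I_2 => if val j == 0 then j0 else j1); split.
- by move=> [[|[|i]] Hi] [[|[|j]] Hj].
- move=> j Hac.
  have {Hac} Hac : acl (fun b => exists j' : 'I_2, j' < j /\ b = a (if val j' == 0 then j0 else j1)) (a (if val j == 0 then j0 else j1)).
    apply: (acl_drop Hac) => c [k [Hk [Hnk ->]]]; apply: (elem_acl0 He); exact: HP.
  case: j Hac => [[|[|j]] Hj] //= Hac.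
  + by apply: H0; apply: acl_mono Hac => c [[[|j'] Hj'] []].
  + by apply: H1; apply: acl_mono Hac => c [[[|j'] Hj'] [] //= _ ->].
Qed.

Lemma curve_of_pairs n phi (v : nat -> M) :
  params_in (acl (fun _ : M => False)) n phi v ->
  (forall (N : structure L) (e : M -> N), elementary_embedding e ->
     forall a : 'I_n -> N, sat (ext a (fun k => e (v k))) phi ->
     forall j0 j1 : 'I_n, j0 < j1 -> ~ acl (fun _ : N => False) (a j0) ->
     ~ acl (fun c => c = a j0) (a j1) -> False) ->
  forall d, dim_ge n phi v d -> d <= 1.
Proof.
move=> HP H d Hd; rewrite leqNgt; apply/negP => Hd1.
have [N [e [He [a [Ha [j0 [j1 [H01 [H0 H1]]]]]]]]] := dim_pair Hd Hd1.
exact: H He a Ha j0 j1 H01 H0 H1.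
Qed.

Lemma geo_exchange (N : structure L) (e : M -> N) : geometric M -> elementary_embedding e -> exchange N.
Proof. by move=> Hg He; case: (Hg N (elem_models He)). Qed.

Lemma elem_id : elementary_embedding (fun x : M => x).
Proof. by []. Qed.
End Dim.


Lemma size_length (T : Type) (s : seq T) : size s = length s.
Proof. by elim: s => //= x s ->. Qed.

Lemma atmost_iff (T : Type) n (S1 S2 : T -> Prop) :
  (forall b, S1 b <-> S2 b) -> (atmost n S1 <-> atmost n S2).
Proof. by move=> H; split; apply: atmost_imp => b /H. Qed.

Lemma val_lift_max n (k : 'I_n) : val (lift ord_max k) = k.
Proof. by rewrite /= /bump leqNgt ltn_ord. Qed.

Lemma lift_max_ord n (j : 'I_n.+1) (H : j < n) : j = lift ord_max (Ordinal H).
Proof. by apply: val_inj; rewrite val_lift_max. Qed.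

Lemma bool_comb_ext (T : Type) (P : (T -> Prop) -> Prop) X Y :
  bool_comb P X -> (forall x, X x <-> Y x) -> bool_comb P Y.
Proof.
move=> HX H; have -> // : Y = X.
by apply: functional_extensionality => x; apply: propositional_extensionality; rewrite H.
Qed.

Lemma true_cyl (L : signature) (M : structure L) m' :
  curve_cylinder (acl (fun _ : M => False)) (m := m') (fun _ => True).
Proof.
exists 0, (fun i : 'I_0 => widen_ord (leq0n m') i), (fun _ => True); split.
  move=> [] //.
split; last by [].
exists (Ftrue L), (fun _ => univ_elt M); split.
  by move=> k [].
split; first by move=> x; split=> // _ [].
apply: curve_of_pairs.
  by move=> k [].
by move=> N e He a Ha [].
Qed.

Notation aclz := (acl (fun _ => False)).

Theorem lemma3p6 (L : signature) (M : structure L)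
  (Hgeo : geometric M) (Hsat : omega_saturated M)
  (n r : nat) (m : 'I_r -> nat) (s : forall i : 'I_r, 'I_(m i) -> 'I_n)
  (Hs : forall i, strictly_increasing (s i))
  (C : forall i : 'I_r, ('I_(m i).+1 -> M) -> Prop)
  (HC : forall i, curve (acl (fun _ : M => False)) (C i))
  (m' : nat) (sig : 'I_m' -> 'I_n) (Hsig : strictly_increasing sig)
  (Hsig_img : forall j : 'I_n,
      (exists k, sig k = j) <-> (exists (i : 'I_r) (k : 'I_(m i)), s i k = j)) :
  exists (E : ('I_m'.+1 -> M) -> Prop) (Ln : nat) (q : 'I_Ln -> M)
         (phi : 'I_Ln -> ('I_m' -> M) -> Prop),
    curve (acl (fun _ : M => False)) E /\
    (forall l, acl (fun _ : M => False) (q l)) /\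
    (forall l, bool_comb (curve_cylinder (acl (fun _ : M => False)) (m:=m')) (phi l)) /\
    (forall (x : 'I_n -> M) (y : M),
       (forall i, C i (snoc (fun k => x (s i k)) y)) <->
       (E (snoc (fun k => x (sig k)) y) \/
        exists l, y = q l /\ phi l (fun k => x (sig k)))) /\
    (forall (x' : 'I_m' -> M) (y : M), E (snoc x' y) -> forall l, y <> q l).
Proof.
pose ide := fun c : M => c.
have ExM : exchange M := geo_exchange Hgeo (@elem_id _ M).
have UFM : uniform_finiteness M by case: (Hgeo M (fun phi H w => H w)).
pose spec i (P : pres M) := pok (acl (fun _ : M => False)) (m i).+1 P /\
   (forall x, C i x <-> interp ide P x) /\ (forall d, dim_ge (m i).+1 P.1 P.2 d -> d <= 1).
have HPc0 : forall i, exists P, spec i P.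
  move=> i; have [phi [v [H1 [H2 H3]]]] := HC i; by exists (phi, v).
pose Pc i := epsilon (inhabits (@ptrue _ M)) (spec i).
have HPc : forall i, spec i (Pc i) by move=> i; apply: epsilon_spec; exact: HPc0.
have Hex : forall i (k : 'I_(m i)), exists j, sig j == s i k.
  move=> i k; have [j Hj] := proj2 (Hsig_img (s i k)) (ex_intro _ i (ex_intro _ k erefl)).
  by exists j; apply/eqP.
pose tau i k := xchoose (Hex i k).
have Htau : forall i k, sig (tau i k) = s i k by move=> i k; exact: eqP (xchooseP (Hex i k)).
have Htau_si : forall i, strictly_increasing (tau i).
  by move=> i a b Hab; rewrite -(si_lt Hsig) !Htau; apply: Hs.
pose rho' i (j : 'I_(m i).+1) : 'I_m'.+1 :=
  match unlift ord_max j with Some k => lift ord_max (tau i k) | None => ord_max end.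
pose rho i (j : 'I_(m i).+1) : 'I_m'.+1 + M := inl (rho' i j).
have Hrho : forall (T : Type) (x' : 'I_m' -> T) (y : T) i,
    (fun j => snoc x' y (rho' i j)) = snoc (fun k => x' (tau i k)) y.
  move=> T x' y i; apply: functional_extensionality => j; rewrite /rho'.
  by case: (unliftP ord_max j) => [k ->|->]; rewrite ?snoc_lift ?snoc_max ?liftK ?unlift_none.
have HEconj : forall (K : structure L) (e : M -> K) i (u : 'I_m'.+1 -> K),
    interp e (ppre (rho i) (Pc i)) u <-> interp e (Pc i) (fun j => u (rho' i j)).
  by move=> K e i u; rewrite interp_ppre.
pose tau2 i (k : 'I_(m i)) : 'I_2 -> 'I_(m i).+1 :=
  fun j => if val j == 0 then lift ord_max k else ord_max.
pose Pp i k := pproj (tau2 i k) (Pc i).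
have HPp : forall (K : structure L) (e : M -> K) i k (z y : K),
    interp e (Pp i k) (pair2 z y) <->
    exists t, t (lift ord_max k) = z /\ t ord_max = y /\ interp e (Pc i) t.
  move=> K e i k z y; rewrite interp_pproj; split.
  - move=> [t [Ht HP]]; exists t; split; [exact: (Ht ord0)|split; [exact: (Ht ord_max)|exact: HP]].
  - move=> [t [H1 [H2 HP]]]; exists t; split => // -[[|[|j]] Hj] //.
have pokPp : forall i k, pok aclz 2 (Pp i k) by move=> i k; apply: pok_pproj; exact: (HPc i).1.
pose Q i k (y : M) := ~ exists l, forall z, interp ide (Pp i k) (pair2 z y) -> List.In z l.
have Hw : forall (K : structure L) (e : M -> K) (P : pres M) (y z : K),
    sat (upd (upd (fun kk => e (P.2 kk)) 1 y) 0 z) P.1 <-> interp e P (pair2 z y).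
  by move=> K e P y z; rewrite /interp; apply: sat_ext => kk; rewrite ext_pair2.
have QAB : forall i k, (exists l, forall y, Q i k y -> List.In y l) /\ (forall y, Q i k y -> aclz y).
  move=> i k.
  have [K0 HK0] := UFM (Pp i k).1.
  set V := (Pp i k).2.
  have HQ : forall y, Q i k y <-> ~ atmost K0 (fun z => interp ide (Pp i k) (pair2 z y)).
    move=> y; split.
    - move=> HQy [l [_ Hl]]; apply: HQy; by exists l.
    - move=> Hn [l Hl]; case: (HK0 (upd V 1 y)) => [Hinf|[s0 [Hs0 Hs0']]].
      + apply: Hinf; exists l => b /(Hw _ ide); exact: Hl.
      + apply: Hn; exists s0; split; first by rewrite size_length; apply/leP.
        by move=> b /(Hw _ ide); exact: Hs0'.
  pose g kk := if kk == 1 then 0 else kk.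
  pose th := fsub g (Fnot (AtMost K0 (Pp i k).1)).
  have Hth : forall y, sat (upd V 0 y) th <-> Q i k y.
    move=> y; rewrite /th sat_fsub HQ.
    have E1 : forall b, sat (upd (fun kk => upd V 0 y (g kk)) 0 b) (Pp i k).1 <->
                        interp ide (Pp i k) (pair2 b y).
      move=> b; rewrite -Hw; apply: sat_ext => kk; rewrite /upd /g; by case: kk => [|[|kk]].
    change (~ sat (fun kk => upd V 0 y (g kk)) (AtMost K0 (Pp i k).1) <->
            ~ atmost K0 (fun z => interp ide (Pp i k) (pair2 z y))).
    by rewrite sat_AtMost (atmost_iff _ E1).
  have Hthfree : forall kk, free kk th -> kk <> 0 -> aclz (V kk).
    move=> kk /free_fsub [k' [Hk' ->]] Hg0.
    move: Hk' => /free_AtMost [Hk' Hk'0].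
    move: Hg0; rewrite /g; case: eqP => // Hk'1 _.
    apply: (pokPp i k) Hk' _.
    by case: k' Hk'0 Hk'1 => [|[|k']].
  have QA : exists l, forall y, Q i k y -> List.In y l.
    apply: NNPP => Hnl.
    have Hinf : forall l, exists y, sat (upd V 0 y) th /\ ~ List.In y l.
      move=> l; apply: NNPP => Hn; apply: Hnl; exists l => y Hy.
      apply: NNPP => Hyl; apply: Hn; exists y; split => //; exact/Hth.
    have H1 : forall kk, free kk th -> kk = 0 \/ List.In kk (iota 1 (fbnd th)).
      move=> kk Hk; case: (kk =P 0) => [->|Hk0]; [by left|right; apply/In_mem].
      by rewrite mem_iota add1n ltnS (ltnW (free_bnd Hk)) andbT lt0n; apply/eqP.
    have H2 : ~ List.In 0 (iota 1 (fbnd th)) by move/In_mem; rewrite mem_iota.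
    have [y [Hy Hyn]] := sat_gen Hsat H1 H2 Hinf.
    have HyQ := (Hth y).1 Hy.
    have HyA : ~ aclz y by move=> H; apply: Hyn; apply: acl_mono H => c [].
    have H1' : forall kk, free kk (Pp i k).1 -> kk = 0 \/ List.In kk (iota 1 (fbnd (Pp i k).1).+1).
      move=> kk Hk; case: (kk =P 0) => [->|Hk0]; [by left|right; apply/In_mem].
      by rewrite mem_iota add1n ltnS (leqW (ltnW (free_bnd Hk))) andbT lt0n; apply/eqP.
    have H2' : ~ List.In 0 (iota 1 (fbnd (Pp i k).1).+1) by move/In_mem; rewrite mem_iota.
    have Hinf' : forall l, exists z, sat (upd (upd V 1 y) 0 z) (Pp i k).1 /\ ~ List.In z l.
      move=> l; apply: NNPP => Hn; apply: HyQ; exists l => z Hz.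
      apply: NNPP => Hzl; apply: Hn; exists z; split => //; exact: (proj2 (Hw _ ide (Pp i k) y z) Hz).
    have [z [Hz Hzn]] := sat_gen Hsat H1' H2' Hinf'.
    have HzA : ~ acl (fun c => c = y) z.
      move=> H; apply: Hzn; apply: acl_mono H => c ->; exists 1; split; last by rewrite upd_eq.
      by apply/In_mem; rewrite mem_iota.
    have [t [Ht1 [Ht2 Htc]]] := (HPp _ ide i k z y).1 ((Hw _ ide _ y z).1 Hz).
    have Hd := dim_build (@elem_id _ M) (HPc i).1 Htc (j0 := lift ord_max k) (j1 := ord_max).
    have : 2 <= 1; last by [].
    apply: (HPc i).2.2; apply: Hd.
    + by rewrite val_lift_max ltn_ord.
    + rewrite Ht1 => H; apply: HzA; apply: acl_mono H => c [].
    + rewrite Ht1 Ht2 => H.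
      have H3 : acl (fun c => c = y \/ False) z.
        apply: ExM; last exact: HyA.
        by apply: acl_mono H => c ->; left.
      by apply: HzA; apply: acl_mono H3 => c [|[]].
  split => //; move=> y Hy; have [l Hl] := QA.
  apply: (@acl_drop _ _ (fun _ => False) aclz).
  - exists th, V; split; [|split].
    + move=> kk Hk Hk0; right; exact: Hthfree.
    + exact/Hth.
    + by exists l => b /Hth; exact: Hl.
  - by [].
have [l0 Hl0] : exists l0, forall i k y, Q i k y -> List.In y l0.
  have H1 : forall i, exists l, forall k y, Q i k y -> List.In y l.
    move=> i; have [l Hl] := @fin_union _ _ (fun k y => Q i k y) (enum 'I_(m i)) (fun k _ => (QAB i k).1).
    by exists l => k y Hy; apply: (Hl k) => //; apply/In_mem; rewrite mem_enum.
  have H2 : forall i, List.In i (enum 'I_r) -> exists l, forall y, (exists k, Q i k y) -> List.In y l.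
    move=> i _; have [l Hl] := H1 i; exists l => y [k Hk]; exact: Hl Hk.
  have [l Hl] := fin_union H2.
  exists l => i k y Hy; apply: (Hl i); [apply/In_mem; rewrite mem_enum //|by exists k].
have [ql Hql] := list_filter_prop (fun y => exists i k, Q i k y) l0.
have Hql' : forall y, List.In y ql <-> exists i k, Q i k y.
  move=> y; rewrite Hql; split => [[]//|[i [k Hy]]]; split; [exact: Hl0 Hy|by exists i, k].
have Hqacl : forall y, List.In y ql -> aclz y by move=> y /Hql' [i [k Hy]]; exact: (QAB i k).2.
pose E := pands m'.+1 ([seq ppre (rho i) (Pc i) | i <- enum 'I_r] ++
                       [seq pnot (peqc (ord_max : 'I_m'.+1) c) | c <- ql]).
have HE : forall (K : structure L) (e : M -> K) (u : 'I_m'.+1 -> K), interp e E u <->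
   (forall i, interp e (Pc i) (fun j => u (rho' i j))) /\ (forall c, List.In c ql -> u ord_max <> e c).
  move=> K e u; rewrite interp_pands; split.
  - move=> H; split.
    + move=> i; rewrite -HEconj; apply: H; apply/In_cat; left; apply/In_map; exists i; split => //.
      apply/In_mem; exact: mem_enum.
    + move=> c Hc Heq; apply: (H (pnot (peqc ord_max c))); last exact/interp_peqc.
      apply/In_cat; right; apply/In_map; by exists c.
  - move=> [H1 H2] P /In_cat [/In_map [i [_ ->]]|/In_map [c [Hc ->]]].
    + by rewrite HEconj; apply: H1.
    + by rewrite interp_pnot interp_peqc; apply: H2.
have pokE : pok aclz m'.+1 E.
  apply: pok_pands => P /In_cat [/In_map [i [_ ->]]|/In_map [c [Hc ->]]].
  - by apply: pok_ppre; first exact: (HPc i).1.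
  - apply: pok_pnot; apply: pok_peqc; exact: Hqacl.
have KEY : forall (N : structure L) (e : M -> N), elementary_embedding e ->
    forall a : 'I_m'.+1 -> N, interp e E a ->
    forall j : 'I_m', acl (fun c => c = a ord_max) (a (lift ord_max j)).
  move=> N e He a Ha j.
  have [i [k Hik]] := (Hsig_img (sig j)).1 (ex_intro _ j erefl).
  have Htj : tau i k = j by apply: (si_inj Hsig); rewrite Htau.
  pose R := pand 2 (Pp i k) (pands 2 [seq pnot (peqc (ord_max : 'I_2) c) | c <- ql]).
  have HR : forall (K : structure L) (e' : M -> K) (z y : K), interp e' R (pair2 z y) <->
      interp e' (Pp i k) (pair2 z y) /\ (forall c, List.In c ql -> y <> e' c).
    move=> K e' z y; rewrite interp_pand interp_pands; split=> [[H1 H2]|[H1 H2]]; split => //.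
    - move=> c Hc Heq; apply: (H2 (pnot (peqc ord_max c))); last by apply/interp_peqc.
      apply/In_map; by exists c.
    - move=> P /In_map [c [Hc ->]]; rewrite interp_pnot interp_peqc; exact: H2.
  have pokR : pok aclz 2 R.
    apply: pok_pand; first exact: pokPp.
    apply: pok_pands => P /In_map [c [Hc ->]]; apply: pok_pnot; apply: pok_peqc; exact: Hqacl.
  have [K0 HK0] := UFM R.1.
  have HM : forall y, atmost K0 (fun z => interp ide R (pair2 z y)).
    move=> y; case: (HK0 (upd R.2 1 y)) => [Hinf|[s0 [Hs0 Hs0']]].
    - exfalso; apply: (Hinf); exists [::] => b Hb.
      have [Hb1 Hb2] := (HR _ ide b y).1 ((Hw _ ide R y b).1 Hb).
      have HyQ : Q i k y.
        move=> [l Hl]; apply: Hinf; exists l => b' Hb'.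
        have [Hb1' _] := (HR _ ide b' y).1 ((Hw _ ide R y b').1 Hb'); exact: Hl.
      by case: (Hb2 y) => //; apply/Hql'; exists i, k.
    - exists s0; split; first by rewrite size_length; apply/leP.
      move=> b Hb; apply: Hs0'; exact: (proj2 (Hw _ ide R y b) Hb).
  have HMs : sat R.2 (Fall 1 (AtMost K0 R.1)).
    move=> y; apply/sat_AtMost; apply: atmost_imp (HM y) => b Hb.
    exact: (proj1 (Hw _ ide R y b) Hb).
  have HN := (He _ _).1 HMs (a ord_max).
  move/sat_AtMost: HN => [lN [_ HlN]].
  have HRa : interp e R (pair2 (a (lift ord_max j)) (a ord_max)).
    apply/HR; split.
    - apply/HPp; exists (fun jj => a (rho' i jj)); split; [|split].
      + by rewrite /rho' liftK Htj.
      + by rewrite /rho' unlift_none.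
      + exact: ((HE _ e a).1 Ha).1 i.
    - exact: ((HE _ e a).1 Ha).2.
  apply: (@acl_drop _ _ (fun c => c = a ord_max) aclz _ _ (fun c H => H)).
  exists R.1, (upd (fun kk => e (R.2 kk)) 1 (a ord_max)); split; [|split].
  - move=> kk Hk Hk0; case: (kk =P 1) => [->|Hk1]; [left; exact: upd_eq|right].
    rewrite upd_neq //; apply: (elem_acl0 He); apply: pokR Hk _.
    by case: kk Hk0 Hk1 => [|[|kk]].
  - exact: (proj2 (Hw _ e R _ _) HRa).
  - exists lN => b Hb; apply: HlN; exact: Hb.
have dimE : forall d, dim_ge m'.+1 E.1 E.2 d -> d <= 1.
  apply: curve_of_pairs; first exact: pokE.
  move=> N e He a Ha j0 j1 H01 H0 H1.
  have Ha' : interp e E a := Ha.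
  have Hj0 : j0 < m' by apply: leq_trans H01 _; rewrite -ltnS ltn_ord.
  have ExN := geo_exchange Hgeo He.
  have K0' := KEY N e He a Ha' (Ordinal Hj0).
  rewrite -(lift_max_ord Hj0) in K0'.
  have Hb : acl (fun c => c = a j0 \/ False) (a ord_max).
    apply: ExN; last exact: H0. by apply: acl_mono K0' => c ->; left.
  case: (ltngtP j1 m') => [Hj1|Hj1|Hj1].
  - have K1 := KEY N e He a Ha' (Ordinal Hj1); rewrite -(lift_max_ord Hj1) in K1.
    apply: H1; apply: (@acl_trans1 _ _ _ _ (a ord_max)).
    + by apply: acl_mono K1 => c ->; left.
    + by apply: acl_mono Hb => c [->|[]].
  - by move: (ltn_ord j1); rewrite ltnS leqNgt Hj1.
  - have Hj1' : j1 = ord_max by apply: val_inj.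
    apply: H1; rewrite Hj1'; by apply: acl_mono Hb => c [->|[]].
have HCyl : forall i (c : M), aclz c ->
    curve_cylinder aclz (m := m') (fun x' => C i (snoc (fun k => x' (tau i k)) c)).
  move=> i c Hc.
  exists (m i), (tau i), (fun z => C i (snoc z c)); split; first exact: Htau_si.
  split; last by [].
  pose hf (j : 'I_(m i).+1) : 'I_(m i) + M :=
    match unlift ord_max j with Some k => inl k | None => inr c end.
  have Hhf : forall (K : structure L) (e : M -> K) (z : 'I_(m i) -> K),
      (fun j => match hf j with inl i0 => z i0 | inr c0 => e c0 end) = snoc z (e c).
    move=> K e z; apply: functional_extensionality => j; rewrite /hf /snoc.
    by case: (unlift ord_max j).
  pose Pf := ppre hf (Pc i).
  have HPf : forall (K : structure L) (e : M -> K) (z : 'I_(m i) -> K),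
      interp e Pf z <-> interp e (Pc i) (snoc z (e c)).
    by move=> K e z; rewrite /Pf interp_ppre Hhf.
  have pokPf : pok aclz (m i) Pf.
    apply: pok_ppre; first exact: (HPc i).1.
    move=> j c0; rewrite /hf; case: (unlift ord_max j) => [k|] //; by case=> <-.
  exists Pf.1, Pf.2; split; first exact: pokPf.
  split.
  - move=> z; rewrite (HPc i).2.1; exact: (iff_sym (HPf _ ide z)).
  - apply: curve_of_pairs; first exact: pokPf.
    move=> N e He a Ha j0 j1 H01 H0 H1.
    have Ha' := (HPf _ e a).1 Ha.
    have : 2 <= 1; last by [].
    apply: (HPc i).2.2.
    apply: (dim_build He (HPc i).1 Ha' (j0 := lift ord_max j0) (j1 := lift ord_max j1)).
    + by rewrite !val_lift_max.
    + by rewrite snoc_lift.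
    + by rewrite !snoc_lift.
pose Ln := size ql.
pose q (l : 'I_Ln) := nth (univ_elt M) ql l.
have Hqin : forall l, List.In (q l) ql by move=> l; apply/(In_nth_ord (univ_elt M)); by exists l.
pose phi l := fun x' : 'I_m' -> M => forall i, C i (snoc (fun k => x' (tau i k)) (q l)).
exists (fun u => interp ide E u), Ln, q, phi.
split; [|split; [|split; [|split]]].
- exists E.1, E.2; split; [exact: pokE|split; [by []|exact: dimE]].
- move=> l; exact: Hqacl (Hqin l).
- move=> l.
  have H : forall ss : seq 'I_r, bool_comb (curve_cylinder aclz (m := m'))
      (fun x' => forall i, List.In i ss -> C i (snoc (fun k => x' (tau i k)) (q l))).
    elim=> [|i0 ss IH].
    + apply: bool_comb_ext (bc_base (@true_cyl _ M m')) _ => x'; by split => // _ i [].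
    + apply: bool_comb_ext (bc_and (bc_base (HCyl i0 (q l) (Hqacl _ (Hqin l)))) IH) _ => x'.
      split=> [[H1 H2] i [<-|Hi]|H]; [exact: H1|exact: H2|split].
      * by apply: H; left.
      * by move=> i Hi; apply: H; right.
  apply: bool_comb_ext (H (enum 'I_r)) _ => x'; split=> [Hx i|Hx i _]; last exact: Hx.
  by apply: Hx; apply/In_mem; exact: mem_enum.
- move=> x y.
  have Htup : forall i, (fun k => x (sig (tau i k))) = (fun k => x (s i k)).
    by move=> i; apply: functional_extensionality => k; rewrite Htau.
  have Hr : forall i, (fun j => snoc (fun k => x (sig k)) y (rho' i j)) = snoc (fun k => x (s i k)) y.
    by move=> i; rewrite Hrho Htup.
  have HEx : interp ide E (snoc (fun k => x (sig k)) y) <->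
      (forall i, C i (snoc (fun k => x (s i k)) y)) /\ (forall c, List.In c ql -> y <> c).
    rewrite HE snoc_max; split=> [[H1 H2]|[H1 H2]]; split => // i.
    - by rewrite (HPc i).2.1 -Hr; exact: H1.
    - by rewrite Hr -(HPc i).2.1; exact: H1.
  change ((forall i, C i (snoc (fun k => x (s i k)) y)) <->
     interp ide E (snoc (fun k => x (sig k)) y) \/
     (exists l, y = q l /\ phi l (fun k => x (sig k)))).
  rewrite HEx; split.
  + move=> H; case: (classic (List.In y ql)) => Hy.
    * right; have [l Hl] := (In_nth_ord (univ_elt M) ql y).1 Hy.
      exists l; split => // i; rewrite /phi (Htup i) /q -Hl; exact: H.
    * left; split => // c Hc Hyc; apply: Hy; by rewrite Hyc.
  + case=> [[H1 _]|[l [Hyl Hphi]]] //.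
    move=> i; rewrite Hyl; have := Hphi i; by rewrite (Htup i).
- move=> x' y /(HE _ ide) [_ H2] l Hyl; apply: (H2 (q l) (Hqin l)); by rewrite snoc_max.
Qed.
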